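(* Let $n\ge 1$ and $a\ge 0$ be integers with $a\le n$. Then \[ \sum_{l=0}^{a}(1-l)\,e_l\,X_{P_{n-l}}=\begin{cases}X_{K_{a+1}^{n-1-a}}\big/a!, & \text{if } a\le n-1,\\ e_n, & \text{if } a=n.\end{cases} \]
   Context: The chromatic symmetric function of a finite simple graph $G$ is $X_G=\sum_{\kappa}\prod_{v\in V(G)}x_{\kappa(v)}$, where $\kappa$ ranges over proper colorings $\kappa:V(G)\to\{1,2,\dots\}$; the empty graph has $X=1$. $e_l$ is the $l$-th elementary symmetric function, $e_0=1$. $P_j$ is the path on $j$ vertices ($P_0$ empty). $K_{s}^{t}$ is the lollipop: the complete graph $K_s$ with a pendant path of length $t$ (with $t$ new vertices) attached at one vertex. *)

(* Defs.v *)
From mathcomp Require Import all_boot all_order all_algebra.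
From mathcomp Require Import mpoly.
Set Implicit Arguments. Unset Strict Implicit. Unset Printing Implicit Defensive.
Import GRing.Theory.
Local Open Scope ring_scope.

(* A finite simple graph on a finType V is given by its adjacency relation
   (expected symmetric and irreflexive). *)

(* Chromatic symmetric function X_G, restricted to the first N variables
   x_1..x_N (i.e. colours 'I_N).  Identities of symmetric functions are
   equivalent to the corresponding identities in every finite number N of
   variables. *)
Definition proper_col (V : finType) (e : rel V) (N : nat)
  (k : {ffun V -> 'I_N}) : bool :=
  [forall u, forall v, e u v ==> (k u != k v)].

Definition chromN (R : comNzRingType) (N : nat) (V : finType) (e : rel V)
  : {mpoly R[N]} :=
  \sum_(k : {ffun V -> 'I_N} | proper_col e k) \prod_(v : V) 'X_(k v).

Definition path_rel (j : nat) : rel 'I_j :=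
  fun u v => (u.+1 == v :> nat) || (v.+1 == u :> nat).

(* Lollipop K_s^t on vertices 0..s+t-1: vertices 0..s-1 form K_s, and
   s-1, s, ..., s+t-1 form a pendant path of length t attached at s-1. *)
Definition lollipop_rel (s t : nat) : rel 'I_(s + t) :=
  fun u v => ((u < s)%N && (v < s)%N && (u != v))
          || (((u.+1 == v :> nat) || (v.+1 == u :> nat)) && (s <= maxn u v)%N).

Arguments path_rel j : clear implicits.
Arguments lollipop_rel s t : clear implicits.

(* Main.v *)
Require Import Defs.
From mathcomp Require Import all_boot all_order all_algebra.
From mathcomp Require Import mpoly.
From mathcomp Require Import fingroup perm.
From mathcomp Require Import zify ring.
Import GRing.Theory.
Set Implicit Arguments. Unset Strict Implicit. Unset Printing Implicit Defensive.
Local Open Scope ring_scope.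

Section Work.
Variable N : nat.
Local Notation R := {mpoly rat[N]}.
Local Notation col n := {ffun 'I_n -> 'I_N}.
Implicit Types r : nat -> nat -> bool.

Definition wt n (k : col n) : R := \prod_(i < n) 'X_(k i).
Definition okr n (r : nat -> nat -> bool) (k : col n) : bool :=
  [forall u : 'I_n, forall v : 'I_n, r u v ==> (k u != k v)].
Definition chromR n r : R := \sum_(k : col n | okr r k) wt k.
Definition H n r (c : 'I_N) : R :=
  \sum_(k : col n.+1 | okr r k && (k ord_max == c)) wt k.
Definition Top (h : 'I_N -> R) (c : 'I_N) : R := 'X_c * \sum_(d | d != c) h d.

Lemma chromN_R n (e : rel 'I_n) r : (forall u v : 'I_n, e u v = r u v) ->
  chromN rat N e = chromR n r.
Proof.
move=> he; apply: eq_bigl => k; rewrite /proper_col /okr.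
by apply: eq_forallb => u; apply: eq_forallb => v; rewrite he.
Qed.

Lemma chromR_H n r : chromR n.+1 r = \sum_(c : 'I_N) H n r c.
Proof. by rewrite /chromR (partition_big (fun k : col n.+1 => k ord_max) xpredT). Qed.

Lemma H_ext n r r' c : (forall u v : 'I_n.+1, r u v = r' u v) -> H n r c = H n r' c.
Proof.
move=> hr; apply: eq_bigl => k; congr andb.
by apply: eq_forallb => u; apply: eq_forallb => v; rewrite hr.
Qed.

Definition ext n (k : col n) (c : 'I_N) : col n.+1 :=
  [ffun i => if unlift ord_max i is Some j then k j else c].

Lemma ext_max n k c : @ext n k c ord_max = c.
Proof. by rewrite ffunE unlift_none. Qed.
Lemma ext_lift n k c j : @ext n k c (lift ord_max j) = k j.
Proof. by rewrite ffunE liftK. Qed.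

Lemma sum_colS n (F : col n.+1 -> R) :
  \sum_(k : col n.+1) F k = \sum_(k : col n) \sum_(c : 'I_N) F (ext k c).
Proof.
rewrite pair_big /=.
rewrite (reindex (fun p : col n * 'I_N => ext p.1 p.2)) //.
exists (fun k : col n.+1 => ([ffun j => k (lift ord_max j)], k ord_max)).
- move=> [k c] _ /=; rewrite ext_max; congr pair.
  by apply/ffunP=> j; rewrite ffunE ext_lift.
- move=> k _ /=; apply/ffunP => i; rewrite ffunE.
  by case: unliftP => [j ->| ->]; rewrite ?ffunE.
Qed.

Lemma wt_ext n k c : wt (@ext n k c) = wt k * 'X_c.
Proof.
rewrite /wt big_ord_recr /= ext_max; congr (_ * _).
apply: eq_bigr => i _.
have -> : widen_ord (leqnSn n) i = lift ord_max i by apply: ord_inj; rewrite lift_max.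
by rewrite ext_lift.
Qed.

Lemma okr_ext n r k c : (forall u v, r u v = r v u) -> r n n = false ->
  okr r (@ext n k c) = okr r k && [forall j : 'I_n, r j n ==> (k j != c)].
Proof.
move=> rs rnn; apply/idP/idP.
- move=> /forallP H1; apply/andP; split.
  + apply/forallP => u; apply/forallP => v.
    have := forallP (H1 (lift ord_max u)) (lift ord_max v).
    by rewrite !ext_lift !lift_max.
  + apply/forallP => j; have := forallP (H1 (lift ord_max j)) ord_max.
    by rewrite ext_lift ext_max lift_max.
- case/andP => /forallP H1 /forallP H2; apply/forallP => u; apply/forallP => v.
  case: (unliftP ord_max u) => [u' ->| ->]; case: (unliftP ord_max v) => [v' ->| ->];
  rewrite ?ext_lift ?ext_max ?lift_max.
  + exact: (forallP (H1 u') v').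
  + exact: H2.
  + by rewrite rs eq_sym; apply: H2.
  + by rewrite /= rnn.
Qed.

Lemma H_gen n r c : (forall u v, r u v = r v u) -> r n.+1 n.+1 = false ->
  H n.+1 r c = 'X_c * \sum_(k : col n.+1 | okr r k &&
     [forall j : 'I_n.+1, r j n.+1 ==> (k j != c)]) wt k.
Proof.
move=> rs rnn; rewrite /H big_mkcond sum_colS mulr_sumr.
rewrite [RHS]big_mkcond; apply: eq_bigr => k _.
rewrite (bigD1 c) //= big1 => [|d /negbTE dc]; last by rewrite ext_max dc andbF.
rewrite ext_max eqxx andbT okr_ext // wt_ext addr0.
by case: ifP => _; rewrite ?mulr0 // mulrC.
Qed.

Lemma forall_last n (k : col n.+1) r c :
  (forall j : 'I_n.+1, r j n.+1 = (j == n :> nat)) ->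
  [forall j : 'I_n.+1, r j n.+1 ==> (k j != c)] = (k ord_max != c).
Proof.
move=> hr; apply/forallP/idP => [H1| H1 j].
- by have := H1 ord_max; rewrite hr eqxx.
- rewrite hr; apply/implyP => /eqP hj.
  by have -> : j = ord_max by apply/val_inj.
Qed.

Lemma H_step n r c : (forall u v, r u v = r v u) -> r n.+1 n.+1 = false ->
  (forall j : 'I_n.+1, r j n.+1 = (j == n :> nat)) ->
  H n.+1 r c = Top (H n r) c.
Proof.
move=> rs rnn hr; rewrite H_gen //; congr (_ * _).
under eq_bigl do rewrite forall_last //.
rewrite (partition_big (fun k : col n.+1 => k ord_max) (fun d => d != c)) => [|k /andP[]//].
apply: eq_bigr => d dc; apply: eq_bigl => k.
by case: (k ord_max =P d) => [->|]; rewrite ?dc ?andbT ?andbF.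
Qed.

Lemma col0_eq (k k' : col 0) : k = k'.
Proof. by apply/ffunP => -[]. Qed.

Lemma sum_col0 (F : col 0 -> R) k0 : \sum_(k : col 0) F k = F k0.
Proof.
rewrite (eq_bigr (fun _ => F k0)) => [|k _]; last by rewrite (col0_eq k k0).
by rewrite sumr_const card_ffun !card_ord expn0.
Qed.

Lemma H0 r c : (forall u v, r u v = r v u) -> r 0%N 0%N = false -> H 0 r c = 'X_c.
Proof.
move=> rs r00; rewrite /H big_mkcond sum_colS (sum_col0 _ [ffun i => c]).
rewrite (bigD1 c) //= big1 => [|d /negbTE dc]; last by rewrite ext_max dc andbF.
rewrite ext_max eqxx andbT okr_ext //.
have -> : okr r ([ffun=> c] : col 0) by apply/forallP => -[].
have -> : [forall j : 'I_0, r j 0%N ==> (([ffun=> c] : col 0) j != c)] by apply/forallP => -[].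
by rewrite wt_ext /wt big_ord0 mul1r addr0.
Qed.

Definition cliq (u v : nat) := u != v.

Lemma okr_cliq n (k : col n) : okr cliq k = injectiveb k.
Proof.
apply/forallP/injectiveP => [H1 u v kuv | inj u].
- apply/eqP; apply/negPn/negP => uv.
  by have := forallP (H1 u) v; rewrite kuv eqxx implybF /cliq /= uv.
- apply/forallP => v; apply/implyP => uv; apply/negP => /eqP /inj huv.
  by move: uv; rewrite huv /cliq eqxx.
Qed.

Definition Jsum n : R := \sum_(k : col n | injectiveb k) wt k.

Lemma chromR_cliq n : chromR n cliq = Jsum n.
Proof. by apply: eq_bigl => k; rewrite okr_cliq. Qed.

Lemma J_e s : Jsum s = s`!%:R *: mesym N rat s.
Proof.
pose imI (f : col s) := f @: 'I_s.
rewrite /Jsum (partition_big imI (fun A : {set 'I_N} => #|A| == s)) /=; last first.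
  by move=> f /injectiveP injf; rewrite card_imset ?card_ord.
rewrite /mesym scaler_sumr; apply: eq_bigr => A /eqP cardA.
have -> : \sum_(f : col s | injectiveb f && (imI f == A)) wt f =
          \sum_(f : col s | injectiveb f && (imI f == A)) \prod_(i in A) 'X_i.
  apply: eq_bigr => f /andP[/injectiveP injf /eqP <-].
  rewrite /imI big_imset /=; last by move=> x y _ _; apply: injf.
  by rewrite /wt; apply: eq_bigl => i; rewrite inE.
rewrite sumr_const scaler_nat; congr (_ *+ _).
have [f0 inj_f0 im_f0]: exists2 f, injective f & f @: 'I_s = A.
  rewrite -cardA; exists enum_val; first exact: enum_val_inj.
  apply/setP=> a; apply/imsetP/idP=> [[i _ ->] | Aa]; first exact: enum_valP.
  by exists (enum_rank_in Aa a); rewrite ?enum_rankK_in.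
rewrite -sum1_card.
rewrite (reindex (fun p : {ffun 'I_s -> 'I_s} => [ffun i => f0 (p i)])) /=; last first.
  pose ff0' f i := odflt i [pick j | f i == f0 j].
  exists (fun f => [ffun i => ff0' f i]) => [p _ | f].
    apply/ffunP=> i; rewrite ffunE /ff0'; case: pickP => [j | /(_ (p i))].
      by rewrite ffunE (inj_eq inj_f0) => /eqP.
    by rewrite ffunE eqxx.
  rewrite inE => /andP[/injectiveP injf /eqP im_f].
  apply/ffunP=> i; rewrite !ffunE /ff0'; case: pickP => [y /eqP //|].
  have /imsetP[j _ eq_f0j_fi]: f i \in f0 @: 'I_s by rewrite im_f0 -im_f imset_f.
  by move/(_ j)/eqP.
have := card_inj_ffuns 'I_s 'I_s; rewrite card_ord ffactnn => <-.
rewrite -sum1dep_card; apply: eq_bigl => p; rewrite unfold_in /=.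
apply/andP/injectiveP=> [[/injectiveP inj_f0p _] i j eq_pij | inj_p].
  by apply: inj_f0p; rewrite !ffunE eq_pij.
set f := finfun _.
have injf: injective f by move=> i j /[!ffunE] /inj_f0; apply: inj_p.
have imIkf : imI f == A.
  rewrite eqEcard card_imset // cardA card_ord leqnn andbT -im_f0.
  by apply/subsetP=> x /imsetP[i _ ->]; rewrite ffunE imset_f.
split; [exact/injectiveP|exact: imIkf].
Qed.

Lemma H_cliq_sym p (j : 'I_p.+1) c :
  \sum_(k : col p.+1 | injectiveb k && (k j == c)) wt k = H p cliq c.
Proof.
rewrite /H; under [RHS]eq_bigl do rewrite okr_cliq.
pose t := tperm j ord_max.
pose h (k : col p.+1) : col p.+1 := [ffun i => k (t i)].
have hK : involutive h by move=> k; apply/ffunP => i; rewrite !ffunE tpermK.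
rewrite [RHS](reindex_inj (inv_inj hK)); apply: eq_big => k.
- rewrite /h ffunE tpermR; congr andb.
  apply/injectiveP/injectiveP => inj u v.
  + by rewrite !ffunE => /inj /perm_inj.
  + move=> kuv; apply: (@perm_inj _ t); apply: inj.
    by rewrite !ffunE /t !tpermK.
- move=> _; rewrite /wt (reindex_inj (@perm_inj _ t)) /=.
  by apply: eq_bigr => i _; rewrite ffunE.
Qed.

Lemma H_cliq_split p c :
  H p.+1 cliq c = 'X_c * (Jsum p.+1 - p.+1%:R *: H p cliq c).
Proof.
rewrite H_gen; last 2 first.
- by move=> u v; rewrite /cliq eq_sym.
- by rewrite /cliq eqxx.
congr (_ * _).
have E1 : forall k : col p.+1,
    okr cliq k && [forall j : 'I_p.+1, cliq j p.+1 ==> (k j != c)] =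
    injectiveb k && ~~ [exists j, k j == c].
  move=> k; rewrite okr_cliq negb_exists; congr andb.
  apply: eq_forallb => j; rewrite /cliq.
  by have -> : (j != p.+1 :> nat) by rewrite neq_ltn ltn_ord.
under eq_bigl do rewrite E1.
suff HA : \sum_(k : col p.+1 | injectiveb k && [exists j, k j == c]) wt k =
    p.+1%:R *: H p cliq c.
  by rewrite /Jsum [in RHS](bigID (fun k : col p.+1 => [exists j, k j == c])) /= HA [_ *: _ + _]addrC addrK.
rewrite scaler_nat -[p.+1 in RHS]card_ord -sumr_const.
under [RHS]eq_bigr => j _ do rewrite -(H_cliq_sym j).
under [RHS]eq_bigr => j _ do rewrite big_mkcondr.
rewrite [RHS]exchange_big /= big_mkcondr; apply: eq_bigr => k /injectiveP injk.
case: existsP => [[j0 /eqP kj0]|nex].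
- rewrite (bigD1 j0) /= ?kj0 ?eqxx // big1 ?addr0 // => j jj0.
  case: eqP => // kj; case/eqP: jj0; apply: injk; by rewrite kj kj0.
- rewrite big1 // => j _; case: eqP => // kj; case: nex; exists j; exact/eqP.
Qed.

Lemma alg0 (x e Q : R) (a b F : rat) : b = a * F - F ->
  x * (F *: e - a *: Q) = a *: (x * (F *: e - Q)) - b *: (e * x).
Proof.
move=> ->. 
have E : ((a * F - F)%:A : R) = a%:A * F%:A - F%:A.
  by rewrite scalerBl -scalerA -[a *: (F%:A)]mulr_algl.
rewrite -[F *: e]mulr_algl -[a *: Q]mulr_algl -[a *: (_ * _)]mulr_algl.
rewrite -[(a * F - F) *: _]mulr_algl E.
move: (a%:A : R) (F%:A : R) => A G.
ring.
Qed.
Lemma alg1 (x e Q : R) p : x * ((p.+1`!)%:R *: e - p.+1%:R *: Q) =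
  p.+1%:R *: (x * (p.+1`!%:R *: e - Q)) - (p * p.+1`!)%:R *: (e * x).
Proof.
apply: alg0; rewrite natrM -natr1. ring.
Qed.

Lemma I1 p c : H p.+1 cliq c =
  p.+1%:R *: Top (H p cliq) c - (p * p.+1`!)%:R *: (mesym N rat p.+1 * 'X_c).
Proof.
have S1 : \sum_(d | d != c) H p cliq d = Jsum p.+1 - H p cliq c.
  by rewrite -chromR_cliq chromR_H [in RHS](bigD1 c) //= [H p cliq c + _]addrC addrK.
by rewrite H_cliq_split /Top S1 J_e alg1.
Qed.

Lemma alg2 (x A B e : R) (al be : rat) :
  x * (al *: A - be *: (e * B)) = al *: (x * A) - be *: (e * (x * B)).
Proof.
rewrite -[al *: A]mulr_algl -[be *: (e * B)]mulr_algl -[al *: (x * A)]mulr_algl.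
rewrite -[be *: (e * (x * B))]mulr_algl.
move: (al%:A : R) (be%:A : R) => a b; ring.
Qed.

Lemma Top_ext h h' c : (forall d, h d = h' d) -> Top h c = Top h' c.
Proof. by move=> hh; rewrite /Top; congr (_ * _); apply: eq_bigr => d _. Qed.

Lemma T_lin h h1 h2 (al be : rat) (e : R) c :
  (forall d, h d = al *: h1 d - be *: (e * h2 d)) ->
  Top h c = al *: Top h1 c - be *: (e * Top h2 c).
Proof.
move=> hd; rewrite /Top (eq_bigr (fun d => al *: h1 d - be *: (e * h2 d))) => [|d _]; last exact: hd.
by rewrite sumrB -scaler_sumr -scaler_sumr -mulr_sumr alg2.
Qed.

Definition pathr (u v : nat) := (u.+1 == v) || (v.+1 == u).
Definition lolr (s u v : nat) :=
  ((u < s)%N && (v < s)%N && (u != v)) || (((u.+1 == v) || (v.+1 == u)) && (s <= maxn u v)%N).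

Lemma pathr_sym u v : pathr u v = pathr v u.
Proof. by rewrite /pathr orbC. Qed.
Lemma pathr_nn m : pathr m m = false.
Proof. rewrite /pathr; apply/negP; lia. Qed.
Lemma lolr_sym s u v : lolr s u v = lolr s v u.
Proof. rewrite /lolr; apply/idP/idP; lia. Qed.
Lemma lolr_nn s m : lolr s m m = false.
Proof. rewrite /lolr; apply/negP; lia. Qed.

Lemma P0 c : H 0 pathr c = 'X_c.
Proof. by apply: H0; [exact: pathr_sym | exact: pathr_nn]. Qed.

Lemma P_step t c : H t.+1 pathr c = Top (H t pathr) c.
Proof.
apply: H_step; [exact: pathr_sym | exact: pathr_nn |].
move=> j; have := ltn_ord j; rewrite /pathr; move: (nat_of_ord j) => i hi.
apply/idP/idP; lia.
Qed.

Lemma L_step p t c : H (p + t.+1) (lolr p.+1) c = Top (H (p + t) (lolr p.+1)) c.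
Proof.
rewrite addnS; apply: H_step; [exact: lolr_sym | exact: lolr_nn |].
move=> j; have := ltn_ord j; rewrite /lolr; move: (nat_of_ord j) => i hi.
apply/idP/idP; lia.
Qed.

Lemma L0 p c : H p (lolr p.+1) c = H p cliq c.
Proof.
apply: H_ext => u v; have := ltn_ord u; have := ltn_ord v; rewrite /lolr /cliq.
move: (nat_of_ord u) (nat_of_ord v) => x y hx hy.
apply/idP/idP; lia.
Qed.

Lemma Crec p t c : H (p.+1 + t) (lolr p.+2) c =
  p.+1%:R *: H (p + t.+1) (lolr p.+1) c
  - (p * p.+1`!)%:R *: (mesym N rat p.+1 * H t pathr c).
Proof.
elim: t c => [|t IH] c.
- rewrite addn0 L0 I1 L_step addn0 P0; congr (_ *: _ - _).
  by apply: Top_ext => d; rewrite L0.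
- rewrite L_step [H (p + t.+2) _ _]L_step P_step.
  by apply: T_lin => d; rewrite IH.
Qed.

Lemma XP_S m : chromN rat N (path_rel m.+1) = \sum_c H m pathr c.
Proof. by rewrite (@chromN_R _ _ pathr) ?chromR_H. Qed.

Lemma XL_S a t : chromN rat N (lollipop_rel a.+1 t) = \sum_c H (a + t) (lolr a.+1) c.
Proof. rewrite (@chromN_R _ _ (lolr a.+1)); first exact: chromR_H. by []. Qed.

Lemma XL_rec p t : chromN rat N (lollipop_rel p.+2 t) =
  p.+1%:R *: chromN rat N (lollipop_rel p.+1 t.+1)
  - (p * p.+1`!)%:R *: (mesym N rat p.+1 * chromN rat N (path_rel t.+1)).
Proof.
rewrite XL_S [chromN _ _ (lollipop_rel p.+1 _)]XL_S XP_S.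
rewrite (eq_bigr _ (fun c _ => Crec p t c)).
by rewrite sumrB -scaler_sumr -scaler_sumr -mulr_sumr.
Qed.

Lemma XL0 m : chromN rat N (lollipop_rel m.+1 0) = m.+1`!%:R *: mesym N rat m.+1.
Proof.
rewrite (@chromN_R _ _ cliq); last first.
  move=> u v; have := ltn_ord u; have := ltn_ord v; rewrite /lollipop_rel /cliq -val_eqE /=.
  move: (nat_of_ord u) (nat_of_ord v) => x y hx hy.
  apply/idP/idP; lia.
by rewrite addn0 chromR_cliq J_e.
Qed.

Lemma XL_path t : chromN rat N (lollipop_rel 1 t) = chromN rat N (path_rel t.+1).
Proof.
rewrite XL_S XP_S; apply: eq_bigr => c _; apply: H_ext => u v.
rewrite /lolr /pathr; apply/idP/idP; lia.
Qed.

Lemma XP0 : chromN rat N (path_rel 0) = 1.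
Proof.
rewrite /chromN big_mkcond (sum_col0 _ (ffun0 (card_ord 0) : col 0)).
have -> : proper_col (path_rel 0) (ffun0 (card_ord 0) : col 0) by apply/forallP => -[].
by rewrite big_ord0.
Qed.

Lemma Slem a t :
  \sum_(l < a.+1)
     ((1 - (l : nat)%:R) *: (mesym N rat l * chromN rat N (path_rel ((a + t).+1 - l)%N)))
  = ((a`!)%:R^-1 : rat) *: chromN rat N (lollipop_rel a.+1 t).
Proof.
elim: a t => [|a IH] t.
- rewrite big_ord1 /= subn0 mesym0E mul1r subr0 scale1r add0n fact0 invr1 scale1r.
  by rewrite XL_path.
- rewrite big_ord_recr /= addSnnS IH.
  have -> : ((a + t.+1).+1 - a.+1)%N = t.+1 by lia.
  rewrite XL_rec scalerBr scalerA scalerA.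
  have f1 : ((a.+1)`!%:R^-1 * a.+1%:R : rat) = a`!%:R^-1.
    have h1 : (a.+1%:R : rat) != 0 by rewrite Num.Theory.pnatr_eq0.
    have h2 : ((a`!)%:R : rat) != 0 by rewrite Num.Theory.pnatr_eq0 -lt0n fact_gt0.
    rewrite factS natrM; field; by rewrite h2 /= addrC natr1.
  have f2 : ((a.+1)`!%:R^-1 * (a * a.+1`!)%:R : rat) = a%:R.
    have h2 : ((a.+1`!)%:R : rat) != 0 by rewrite Num.Theory.pnatr_eq0 -lt0n fact_gt0.
    rewrite natrM; field; by rewrite h2.
  rewrite f1 f2; congr (_ + _).
  rewrite -scaleNr; congr (_ *: _).
  rewrite -natr1; ring.
Qed.
End Work.

Theorem lemma4p4 (N n a : nat) (hn : (1 <= n)%N) (han : (a <= n)%N) :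
  \sum_(l < a.+1)
     ((1 - (l : nat)%:R) *: (mesym N rat l * chromN rat N (path_rel (n - l)%N)))
  = if (a <= n.-1)%N
    then ((a`!)%:R^-1 : rat) *: chromN rat N (lollipop_rel a.+1 (n.-1 - a)%N)
    else mesym N rat n.
Proof.
case: ifP => ha.
- have [t ->] : exists t, n = (a + t).+1 by exists (n.-1 - a)%N; lia.
  have -> : ((a + t).+1.-1 - a)%N = t by lia.
  exact: Slem.
- have ean : a = n by lia.
  subst a; case: n hn han ha => // m _ _ _.
  rewrite big_ord_recr /=.
  have := Slem N m 0; rewrite addn0 => ->.
  rewrite XL0 subnn XP0 mulr1 scalerA -scalerDl.
  have -> : ((m`!)%:R^-1 * (m.+1)`!%:R + (1 - m.+1%:R) : rat) = 1.
    have h2 : ((m`!)%:R : rat) != 0 by rewrite Num.Theory.pnatr_eq0 -lt0n fact_gt0.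
    rewrite factS natrM; field; exact: h2.
  by rewrite scale1r.
Qed.
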